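(* Let $\Lambda$ be a finite chain (path graph) with vertices $1,\dots,L$, $L\geq2$, and edges $(x,x+1)$ with arbitrary positive jump rates. For the symmetric simple exclusion process on $\Lambda$, $\lambda(n)=\lambda(1)$ for all $1\le n\le L-1$.
   Context: The SSEP with jump rates $c_{xy}>0$ has generator $(Lf)(\eta)=\sum_{x\sim y}c_{xy}(f(\eta)-f(\eta^{xy}))$ on functions on $\{0,1\}^\Lambda$, where $\eta^{xy}$ interchanges the values of $\eta$ at $x$ and $y$. $L$ preserves the space of functions supported on configurations with exactly $n$ particles ($\sum_x\eta(x)=n$), and $\lambda(n)$ is the smallest positive eigenvalue of $L$ restricted to this space. *)

(* Defs.v *)
From HB Require Import structures.
From mathcomp Require Import all_boot all_order all_algebra all_fingroup.
From mathcomp Require Import reals.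
Set Implicit Arguments. Unset Strict Implicit. Unset Printing Implicit Defensive.
Import Order.TTheory GRing.Theory Num.Theory.
Local Open Scope ring_scope.

(* Sites of the chain: 'I_L = {0,...,L-1} (paper: 1..L).
   Edges: {x, x+1}; the rate of edge {x,x+1} is c x (for x < L-1). *)

Definition config (L : nat) := {ffun 'I_L -> bool}.

Definition nparticles (L : nat) (eta : config L) : nat :=
  (\sum_(x : 'I_L) (eta x : nat))%N.

Definition swap (L : nat) (eta : config L) (x y : 'I_L) : config L :=
  [ffun z => eta (tperm x y z)].

Definition ssep_gen (R : realType) (L : nat) (c : nat -> R)
  (f : config L -> R) (eta : config L) : R :=
  \sum_(x : 'I_L) \sum_(y : 'I_L | val y == (val x).+1)
     c (val x) * (f eta - f (swap eta x y)).

Definition is_eigenvalue_n (R : realType) (L : nat) (c : nat -> R) (n : nat)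
  (mu : R) : Prop :=
  exists f : config L -> R,
    (forall eta, nparticles eta != n -> f eta = 0) /\
    (exists eta, f eta != 0) /\
    (forall eta, ssep_gen c f eta = mu * f eta).

Definition is_lambda (R : realType) (L : nat) (c : nat -> R) (n : nat)
  (mu : R) : Prop :=
  [/\ is_eigenvalue_n L c n mu, 0 < mu &
      forall nu, is_eigenvalue_n L c n nu -> 0 < nu -> mu <= nu].

(* Main.v *)
Require Import Defs.
From HB Require Import structures.
From mathcomp Require Import all_boot all_order all_algebra all_fingroup.
From mathcomp Require Import reals.
From mathcomp Require Import ring lra zify.
From mathcomp Require Import polyrcf.
Set Implicit Arguments. Unset Strict Implicit. Unset Printing Implicit Defensive.
Import Order.TTheory GRing.Theory Num.Theory.
Local Open Scope ring_scope.
Section S.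
Variables (R : realType) (k : nat) (c : nat -> R).
Local Notation L := k.+2.

Lemma swapE (eta : config L) a b z :
  swap eta a b z = (if z == a then eta b else if z == b then eta a else eta z).
Proof.
rewrite /swap ffunE; case: (eqVneq z a) => [->|za]; first by rewrite tpermL.
case: (eqVneq z b) => [->|zb]; first by rewrite tpermR.
by rewrite tpermD // eq_sym.
Qed.

Lemma swap_id (eta : config L) a b : eta a = eta b -> swap eta a b = eta.
Proof.
move=> h; apply/ffunP => z; rewrite swapE.
case: ifP => [/eqP->|_]; first by rewrite h.
by case: ifP => [/eqP->|_].
Qed.

Lemma swapK (eta : config L) a b : swap (swap eta a b) a b = eta.
Proof.
apply/ffunP => z; rewrite !swapE.
case: (eqVneq z a) => [->|za]; rewrite ?eqxx.
  by case: (eqVneq a b) => [->|]; rewrite ?eqxx.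
by case: (eqVneq z b) => [->|zb]; rewrite ?eqxx ?(negbTE za) //.
Qed.

Lemma swapC (eta : config L) a b a' b' :
  a != a' -> a != b' -> b != a' -> b != b' ->
  swap (swap eta a b) a' b' = swap (swap eta a' b') a b.
Proof.
move=> h1 h2 h3 h4.
have h1' := h1; have h2' := h2; have h3' := h3; have h4' := h4.
rewrite eq_sym in h1'; rewrite eq_sym in h2'; rewrite eq_sym in h3'; rewrite eq_sym in h4'.
apply/ffunP => z; rewrite !swapE.
rewrite ?(negbTE h1) ?(negbTE h2) ?(negbTE h3) ?(negbTE h4) ?(negbTE h1') ?(negbTE h2') ?(negbTE h3') ?(negbTE h4').
case: (eqVneq z a) => [->|za]; rewrite ?(negbTE h1) ?(negbTE h2) ?(negbTE h3) ?(negbTE h4) ?(negbTE h1') ?(negbTE h2') ?(negbTE h3') ?(negbTE h4') //.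
case: (eqVneq z b) => [->|zb]; rewrite ?(negbTE h1) ?(negbTE h2) ?(negbTE h3) ?(negbTE h4) ?(negbTE h1') ?(negbTE h2') ?(negbTE h3') ?(negbTE h4') //.
Qed.

Lemma inord_eq (i j : nat) : (i < L)%N -> (j < L)%N ->
  ((inord i : 'I_L) == inord j) = (i == j).
Proof. by move=> hi hj; rewrite -val_eqE /= !inordK. Qed.


Lemma sum_succ (F : 'I_L -> R) (x : nat) :
  \sum_(y : 'I_L | val y == x.+1) F y = if (x.+1 < L)%N then F (inord x.+1) else 0.
Proof.
case: ifP => hx.
  rewrite (big_pred1 (inord x.+1)) // => y /=.
  by rewrite -val_eqE /= inordK.
rewrite big_pred0 // => y; apply/negbTE; apply/eqP => hy.
by move: (ltn_ord y); rewrite hy hx.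
Qed.

Lemma ssep_edge (f : config L -> R) eta :
  ssep_gen c f eta =
  \sum_(i < k.+1) c i * (f eta - f (swap eta (inord i) (inord i.+1))).
Proof.
rewrite /ssep_gen.
have -> : \sum_(x : 'I_L) \sum_(y : 'I_L | val y == (val x).+1)
     c (val x) * (f eta - f (swap eta x y)) =
   \sum_(x : 'I_L) (fun n : nat => if (n.+1 < L)%N then c n * (f eta - f (swap eta (inord n) (inord n.+1))) else 0) (val x).
  apply: eq_bigr => x _; rewrite sum_succ /=.
  by rewrite inord_val.
rewrite big_ord_recr /= ltnn addr0.
apply: eq_bigr => i _ /=.
by rewrite ltnS ltn_ord.
Qed.

Lemma sum_if (n m : nat) (F : nat -> R) :
  \sum_(i < n) (if val i == m then F (val i) else 0) = if (m < n)%N then F m else 0.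
Proof.
rewrite -big_mkcond /=.
case: ifP => hm.
  rewrite (big_pred1 (Ordinal hm)) // => y /=.
rewrite big_pred0 // => y; apply/negbTE; apply/eqP => hy.
by move: (ltn_ord y); rewrite hy hm.
Qed.

Lemma Ene (a b : nat) : (a < L)%N -> (b < L)%N -> a != b ->
  ((inord a : 'I_L) == inord b) = false.
Proof. by move=> ha hb hab; rewrite inord_eq // (negbTE hab). Qed.


Lemma Ene' (a b : nat) : (a < L)%N -> (b < L)%N -> a <> b ->
  ((inord a : 'I_L) == inord b) = false.
Proof. by move=> ha hb hab; rewrite inord_eq //; apply/eqP. Qed.

Lemma swapL (eta : config L) a b : swap eta a b a = eta b.
Proof. by rewrite swapE eqxx. Qed.
Lemma swapR (eta : config L) a b : swap eta a b b = eta a.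
Proof. by rewrite swapE eqxx; case: eqP => [->|]. Qed.
Lemma swapO (eta : config L) a b z : z != a -> z != b -> swap eta a b z = eta z.
Proof. by move=> h1 h2; rewrite swapE (negbTE h1) (negbTE h2). Qed.
Lemma ne (a b : nat) : (a < L)%N -> (b < L)%N -> a <> b -> (inord a : 'I_L) != inord b.
Proof. by move=> ha hb hab; rewrite inord_eq //; apply/eqP. Qed.

Lemma aux1 (ci wi K D Di : R) : 0 <= ci -> Di <= D + K * wi -> K * (0 - ci * wi - 0) <= ci * (D - Di).
Proof. move=> h1 h2. nra. Qed.
Lemma aux2 (ci wi K D Di : R) : 0 <= ci -> Di <= D + K * wi -> K * (0 - 0 - ci * wi) <= ci * (D - Di).
Proof. move=> h1 h2. nra. Qed.
Lemma aux3 (ci K D Di : R) : 0 <= ci -> Di <= D -> K * (0 - 0 - 0) <= ci * (D - Di).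
Proof. move=> h1 h2. nra. Qed.

Lemma lower_bound (hc : forall i, (i < k.+1)%N -> 0 < c i) (v : nat -> R) (T : R)
  (v0 : v 0%N = 0) (vL : v L = 0)
  (vpos : forall j, (0 < j < L)%N -> 0 < v j)
  (vrec : forall i, (i < k.+1)%N -> 2 * v i.+1 - v i - v i.+2 = T * (v i.+1 / c i))
  (f : config L -> R) (nu : R) (hf : forall eta, ssep_gen c f eta = nu * f eta)
  (hnz : exists eta, f eta != 0) (hnu : 0 < nu) : T <= nu.
Proof.
pose w i := v i.+1 / c i.
have wpos i : (i < k.+1)%N -> 0 < w i.
  by move=> hi; apply: divr_gt0; [apply: vpos; rewrite /= ltnS hi | exact: hc].
have cw i : (i < k.+1)%N -> c i * w i = v i.+1.
  by move=> hi; rewrite /w mulrC divfK // gt_eqF // hc.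
case: hnz => eta0 h0.
pose r (p : config L * 'I_k.+1) : R :=
  if p.1 (inord p.2) && ~~ p.1 (inord p.2.+1)
  then `|f (swap p.1 (inord p.2) (inord p.2.+1)) - f p.1| / w p.2 else 0.
pose p0 : config L * 'I_k.+1 := (eta0, ord0).
case: (@arg_maxP _ _ _ p0 predT r isT) => ps _ hmax.
have rge0 p : 0 <= r p.
  rewrite /r; case: ifP => // _; apply: divr_ge0 => //; exact/ltW/wpos.
set K := r ps.
have bound (et : config L) i : (i < k.+1)%N -> et (inord i) -> ~~ et (inord i.+1) ->
    `|f (swap et (inord i) (inord i.+1)) - f et| <= K * w i.
  move=> hi h1 h2; have := hmax (et, Ordinal hi) isT.
  by rewrite /r /= h1 h2 /= ler_pdivrMr //; exact: wpos.
have Kpos : 0 < K.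
  rewrite lt_def rge0 andbT; apply/eqP => K0.
  have allz et i : (i < k.+1)%N -> f (swap et (inord i) (inord i.+1)) = f et.
    move=> hi.
    have z0 (e : config L) : e (inord i) -> ~~ e (inord i.+1) -> f (swap e (inord i) (inord i.+1)) = f e.
      move=> h1 h2; have := bound e i hi h1 h2; rewrite K0 mul0r normr_le0 subr_eq0.
      by move/eqP.
    case h1: (et (inord i)); case h2: (et (inord i.+1)).
    - by rewrite swap_id // h1 h2.
    - by apply: z0; rewrite ?h1 ?h2.
    - set et' := swap et (inord i) (inord i.+1).
      have := z0 et'; rewrite /et' swapK; move=> h; symmetry; apply: h.
        by rewrite swapE eqxx h2.
      rewrite swapE; case: ifP => [/eqP he|_]; last by rewrite eqxx h1.
      by move: h1 h2; rewrite he => ->.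
    - by rewrite swap_id // h1 h2.
  have : nu * f eta0 = 0.
    rewrite -hf ssep_edge big1 // => i _; by rewrite allz // subrr mulr0.
  move/eqP; rewrite mulf_eq0 (gt_eqF hnu) /=; exact/negP.
have hA : ps.1 (inord ps.2) && ~~ ps.1 (inord ps.2.+1).
  apply/negPn/negP => hn; move: Kpos; by rewrite /K /r (negbTE hn) ltxx.
have KD : K = `|f (swap ps.1 (inord ps.2) (inord ps.2.+1)) - f ps.1| / w ps.2.
  by rewrite /K /r hA.
clearbody K; move: hA KD; clear hmax; case: ps => eta [x hx] /= /andP [he1 he2] KD.
set xi := swap eta (inord x) (inord x.+1).
set D0 := f xi - f eta.
pose s : R := if 0 <= D0 then 1 else -1.
have sD : s * D0 = `|D0|.
  rewrite /s; case: ifP => h; first by rewrite mul1r ger0_norm.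
  by rewrite mulN1r ltr0_norm // ltNge h.
have sle a : s * a <= `|a|.
  rewrite /s; case: ifP => _; first by rewrite mul1r ler_norm.
  by rewrite mulN1r -normrN ler_norm.
pose g e := s * f e.
have gb (et : config L) i : (i < k.+1)%N -> et (inord i) -> ~~ et (inord i.+1) ->
    g (swap et (inord i) (inord i.+1)) - g et <= K * w i.
  move=> hi h1 h2; rewrite /g -mulrBr; exact: le_trans (sle _) (bound _ _ hi h1 h2).
have hg e : ssep_gen c g e = nu * g e.
  rewrite /g mulrCA -hf /ssep_gen mulr_sumr; apply: eq_bigr => a _.
  rewrite mulr_sumr; apply: eq_bigr => b _; ring.
set D := g xi - g eta.
have DK : D = K * w x.
  by rewrite /D /g -mulrBr sD KD divfK // gt_eqF // wpos.
have Dpos : 0 < D by rewrite DK mulr_gt0 // wpos.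
have key : nu * D = \sum_(i < k.+1) c i * (D -
    (g (swap xi (inord i) (inord i.+1)) - g (swap eta (inord i) (inord i.+1)))).
  rewrite /D mulrBr -!hg !ssep_edge -sumrB; apply: eq_bigr => i _; ring.
pose beta (i : nat) : R := (if i == x then 2 * v i.+1 else 0)
   - (if i.+1 == x then v i.+1 else 0) - (if i == x.+1 then v i.+1 else 0).
have sumbeta : \sum_(i < k.+1) beta i = 2 * v x.+1 - v x - v x.+2.
  rewrite /beta !sumrB (sum_if _ _ (fun j => 2 * v j.+1)) hx.
  rewrite (sum_if _ _ (fun j => v j.+1)).
  have -> : \sum_(i < k.+1) (if (val i).+1 == x then v (val i).+1 else 0) = v x.
    case Ex: x hx => [|x'] hx'.
      by rewrite v0 big1.
    under eq_bigr => i _ do rewrite eqSS.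
    by rewrite (sum_if _ _ (fun j => v j.+1)) ltnW.
  case: ifP => // hx2.
  have -> : x = k by lia.
  by rewrite vL subr0.
have termb (i : 'I_k.+1) : K * beta i <= c i * (D -
    (g (swap xi (inord i) (inord i.+1)) - g (swap eta (inord i) (inord i.+1)))).
  have Lx : (x < L)%N by lia.
  have Lx1 : (x.+1 < L)%N by lia.
  case: i => j hj /=.
  have Lj : (j < L)%N by lia.
  have Lj1 : (j.+1 < L)%N by lia.
  have cj := ltW (hc j hj).
  rewrite /beta.
  case: (eqVneq j x) => [ejx|njx].
    rewrite ejx (gtn_eqF (ltnSn x)) (ltn_eqF (ltnSn x)) /xi swapK -/xi.
    have -> : g eta - g xi = - D by rewrite /D opprB.
    rewrite -(cw x hx) DK le_eqVlt; apply/orP; left; apply/eqP; ring.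
  case: (eqVneq j.+1 x) => [e1|n1].
    have -> : (j == x.+1) = false by apply/eqP; lia.
    rewrite ?(negbTE njx) -(cw j hj) e1 ?eqxx; apply: aux1 => //.
    have n_jx : (inord j : 'I_L) != inord x by apply: ne => //; clear - njx; lia.
    have n_jx1 : (inord j : 'I_L) != inord x.+1 by apply: ne => //; clear - e1; lia.
    case h: (eta (inord j)).
      rewrite (@swap_id eta (inord j) (inord x)); last by rewrite h he1.
      have xij : xi (inord j) by rewrite /xi (swapO _ n_jx n_jx1) h.
      have xix : ~~ xi (inord x) by rewrite /xi swapL.
      have := gb xi j hj xij; rewrite e1 => /(_ xix) hb.
      rewrite /D; lra.
    rewrite (@swap_id xi (inord j) (inord x)); last first.
      by rewrite /xi (swapO _ n_jx n_jx1) swapL h (negbTE he2).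
    set m := swap eta (inord j) (inord x).
    have mj : m (inord j) by rewrite /m swapL.
    have mx : ~~ m (inord x) by rewrite /m swapR h.
    have := gb m j hj mj; rewrite e1 => /(_ mx); rewrite /m swapK -/m => hb.
    rewrite /D; lra.
  case: (eqVneq j x.+1) => [e2|n2].
    rewrite ?(negbTE njx) ?(negbTE n1) -(cw j hj) e2 ?eqxx; apply: aux2; first by rewrite -e2.
    have Lx2 : (x.+2 < L)%N by lia.
    have hx1 : (x.+1 < k.+1)%N by lia.
    have ex1 := negbTE he2.
    have n_x2x : (inord x.+2 : 'I_L) != inord x by apply: ne => //; clear; lia.
    have n_x2x1 : (inord x.+2 : 'I_L) != inord x.+1 by apply: ne => //; clear; lia.
    case h: (eta (inord x.+2)).
      set m := swap eta (inord x.+1) (inord x.+2).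
      have m1 : m (inord x.+1) by rewrite /m swapL.
      have m2 : ~~ m (inord x.+2) by rewrite /m swapR ex1.
      have := gb m x.+1 hx1 m1 m2; rewrite /m swapK -/m => hb.
      rewrite (@swap_id xi (inord x.+1) (inord x.+2)); last first.
        by rewrite /xi swapR (swapO _ n_x2x n_x2x1) h.
      rewrite /D; lra.
    rewrite (@swap_id eta (inord x.+1) (inord x.+2)); last by rewrite h ex1.
    have xi1 : xi (inord x.+1) by rewrite /xi swapR.
    have xi2 : ~~ xi (inord x.+2) by rewrite /xi (swapO _ n_x2x n_x2x1) h.
    have := gb xi x.+1 hx1 xi1 xi2 => hb.
    rewrite /D; lra.
  rewrite ?(negbTE njx) ?(negbTE n1) ?(negbTE n2); apply: aux3 => //.
  have n_xj : (inord x : 'I_L) != inord j by apply: ne => //; clear - njx; lia.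
  have n_xj1 : (inord x : 'I_L) != inord j.+1 by apply: ne => //; clear - n1; lia.
  have n_x1j : (inord x.+1 : 'I_L) != inord j by apply: ne => //; clear - n2; lia.
  have n_x1j1 : (inord x.+1 : 'I_L) != inord j.+1 by apply: ne => //; clear - njx; lia.
  rewrite /xi (swapC _ n_xj n_xj1 n_x1j n_x1j1).
  set m := swap eta (inord j) (inord j.+1).
  have mx : m (inord x) by rewrite /m (swapO _ n_xj n_xj1).
  have mx1 : ~~ m (inord x.+1) by rewrite /m (swapO _ n_x1j n_x1j1).
  have := gb m x hx mx mx1 => hb.
  rewrite DK; lra.
have : \sum_(i < k.+1) K * beta i <= nu * D.
  by rewrite key; apply: ler_sum => i _; exact: termb.
rewrite -mulr_sumr sumbeta vrec // -/(w x) mulrCA -DK.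
by rewrite ler_pM2r.
Qed.


Lemma nparticles_swap (eta : config L) a b : nparticles (swap eta a b) = nparticles eta.
Proof.
rewrite /nparticles /swap.
under eq_bigr => z _ do rewrite ffunE.
by rewrite [RHS](reindex_inj (@perm_inj _ (tperm a b))).
Qed.

Lemma sum_lt (m n : nat) : (\sum_(z < m) ((z < n)%N : nat))%N = minn m n.
Proof.
elim: m => [|m IH]; first by rewrite big_ord0 min0n.
rewrite big_ord_recr /= IH; case: (ltnP m n) => h /=; lia.
Qed.

Lemma diff_swap (h : 'I_L -> R) (p : 'I_L -> R) a b : a != b ->
  \sum_z h z * p z - \sum_z h (tperm a b z) * p z = (h a - h b) * (p a - p b).
Proof.
move=> ab; rewrite -sumrB (bigD1 a) //= (bigD1 b) 1?eq_sym //=.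
rewrite tpermL tpermR big1 ?addr0; first by ring.
move=> z /andP [zb za]; rewrite tpermD 1?eq_sym //; ring.
Qed.


Lemma lift_eigen (hc : forall i, (i < k.+1)%N -> 0 < c i) (v : nat -> R) (T : R)
  (hT : 0 < T) (v0 : v 0%N = 0) (vL : v L = 0)
  (vpos : forall j, (0 < j < L)%N -> 0 < v j)
  (vrec : forall i, (i < k.+1)%N -> 2 * v i.+1 - v i - v i.+2 = T * (v i.+1 / c i))
  (n : nat) (hn1 : (1 <= n)%N) (hn2 : (n <= k.+1)%N) :
  is_eigenvalue_n L c n T.
Proof.
pose phi (z : nat) := (v z - v z.+1) / T.
have cphi i : (i < k.+1)%N -> c i * (phi i - phi i.+1) = - v i.+1.
  move=> hi; have := vrec i hi; rewrite /phi => h.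
  have cn : c i != 0 by rewrite gt_eqF // hc.
  have Tn : T != 0 by rewrite gt_eqF.
  have -> : (v i - v i.+1) / T - (v i.+1 - v i.+2) / T = - (2 * v i.+1 - v i - v i.+2) / T.
    by field.
  rewrite h; field; exact/andP.
pose S (eta : config L) := \sum_(z : 'I_L) ((eta z : nat)%:R : R) * phi z.
pose F (eta : config L) := if nparticles eta == n then S eta else 0.
have Sdiff (eta : config L) i : (i < k.+1)%N ->
    S eta - S (swap eta (inord i) (inord i.+1)) =
    (((eta (inord i) : nat)%:R : R) - (eta (inord i.+1) : nat)%:R) * (phi i - phi i.+1).
  move=> hi; rewrite /S.
  under [X in _ - X]eq_bigr => z _ do rewrite /swap ffunE.
  rewrite (diff_swap (fun z => ((eta z : nat)%:R : R)) (fun z : 'I_L => phi z)).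
    by rewrite /= !inordK //; lia.
  by rewrite Ene' //; lia.
exists F; split.
  by move=> eta /negbTE h; rewrite /F h.
split; last first.
  move=> eta; rewrite ssep_edge /F.
  case: (eqVneq (nparticles eta) n) => hn; last first.
    by rewrite mulr0 big1 // => i _; rewrite nparticles_swap (negbTE hn) subrr mulr0.
  under eq_bigr => i _ do rewrite nparticles_swap hn eqxx Sdiff // mulrCA cphi //.
  rewrite ?eqxx /S mulr_sumr.
  pose e (j : nat) : R := ((eta (inord j) : nat)%:R).
  rewrite [RHS](_ : _ = \sum_(z < k.+2) (e z * v z - e z * v z.+1)); last first.
    apply: eq_bigr => z _; rewrite /e inord_val /phi; field; by rewrite gt_eqF.
  rewrite sumrB [X in _ = X - _]big_ord_recl [X in _ = _ - X]big_ord_recr /= v0 vL !mulr0 add0r addr0 -sumrB.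
  apply: eq_bigr => i _; rewrite /e /bump /= add1n; ring.
pose eta1 : config L := [ffun z : 'I_L => (val z < n)%N].
have np1 : nparticles eta1 = n.
  rewrite /nparticles; under eq_bigr => z _ do rewrite ffunE.
  rewrite sum_lt; lia.
pose eta2 := swap eta1 (inord n.-1) (inord n).
have np2 : nparticles eta2 = n by rewrite nparticles_swap.
have hn' : (n.-1 < k.+1)%N by lia.
have := Sdiff eta1 n.-1 hn'; rewrite prednK // -/eta2.
have ea : eta1 (inord n.-1) = true by rewrite /eta1 ffunE /= inordK; lia.
have eb : eta1 (inord n) = false by rewrite /eta1 ffunE /= inordK; lia.
rewrite ea eb /= subr0 mul1r => hd.
have pd : phi n.-1 - phi n != 0.
  apply/eqP => h0; have := cphi _ hn'; rewrite prednK // h0 mulr0 => /eqP.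
  rewrite eq_sym oppr_eq0 gt_eqF //; apply: vpos; lia.
case: (eqVneq (F eta1) 0) => h1; last by exists eta1.
exists eta2; move: h1; rewrite /F np1 np2 eqxx => h1.
by move: hd pd; rewrite h1 sub0r => <-; rewrite oppr_eq0.
Qed.

End S.
Section Sh.
Variables (R : realType) (k : nat) (c : nat -> R).
Local Notation L := k.+2.

Fixpoint vp (j : nat) : {poly R} :=
  match j with
  | 0 => 0
  | j1.+1 => match j1 with
             | 0 => 1
             | j'.+1 => (2%:P - (c j')^-1 *: 'X) * vp j1 - vp j'
             end
  end.

Lemma vpS_horner j t : (vp j.+2).[t] = (2 - t / c j) * (vp j.+1).[t] - (vp j).[t].
Proof.
have -> : vp j.+2 = (2%:P - (c j)^-1 *: 'X) * vp j.+1 - vp j by [].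
by rewrite !hornerE (mulrC t).
Qed.

Lemma vp_at0 j : (vp j).[0] = j%:R.
Proof.
suff : (vp j).[0] = j%:R /\ (vp j.+1).[0] = j.+1%:R by case.
elim: j => [|j [IH1 IH2]]; first by rewrite /= hornerC hornerE.
split => //; rewrite vpS_horner IH1 IH2 mul0r subr0 -!natr1; ring.
Qed.

Lemma shoot (hc : forall i, (i < k.+1)%N -> 0 < c i) :
  exists T : R, 0 < T /\ (vp L).[T] = 0 /\
    (forall j, (0 < j < L)%N -> 0 < (vp j).[T]).
Proof.
pose Q := \prod_(j < k.+2) vp j.+1.
have QE t : Q.[t] = \prod_(j < k.+2) (vp j.+1).[t] by rewrite /Q horner_prod.
have Q0 : Q.[0] != 0.
  rewrite QE; apply/prodf_neq0 => i _; by rewrite vp_at0 pnatr_eq0.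
have Qn0 : Q != 0 by apply: contraNneq Q0 => ->; rewrite horner0.
have c0 := hc 0%N isT.
have rootQ t j : (0 < j <= L)%N -> (vp j).[t] = 0 -> root Q t.
  move=> hj h; rewrite /root QE; apply/prodf_eq0; exists (inord j.-1) => //.
  by rewrite inordK ?prednK ?h //; lia.
have r2 : root Q (2 * c 0%N).
  apply: (rootQ _ 2%N) => //; rewrite (vpS_horner 0) (_ : vp 1 = 1) // (_ : vp 0 = 0) // hornerC horner0 mulr1 subr0.
  by rewrite mulfK ?gt_eqF // subrr.
case: (next_rootP Q 0 (2 * c 0%N + 1)) => [Q00|y _ Qy yin hno|cc _ hcc hno].
- by rewrite Q00 eqxx in Qn0.
- move: yin; rewrite in_itv /= => /andP [y0 _].
  exists y; split => //.
  have A j : (0 < j <= L)%N -> 0 <= (vp j).[y].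
    move=> hj; rewrite leNgt; apply/negP => hneg.
    have [z /andP [z0 zy] rz] : exists2 z, 0 <= z <= y & root (- vp j) z.
      apply: poly_ivt; first exact: ltW.
      rewrite !hornerN vp_at0 oppr_le0 ler0n /= oppr_ge0; exact: ltW.
    move: rz; rewrite rootN => /eqP rz.
    have zn0 : z != 0.
      apply/eqP => hz; move: rz; rewrite hz vp_at0 => /eqP; rewrite pnatr_eq0; lia.
    have zny : z != y by apply/eqP => hz; move: hneg; rewrite -hz rz ltxx.
    have : z \in `]0, y[ by rewrite in_itv /= !lt_def zn0 z0 eq_sym zny zy.
    by move/hno; rewrite (rootQ z j).
  have : Q.[y] == 0 by rewrite Qy.
  rewrite QE => /prodf_eq0 hex.
  have exP : exists m, (m < k.+2)%N && ((vp m.+1).[y] == 0).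
    by case: hex => i _ hi; exists (val i); rewrite ltn_ord hi.
  case: (ex_minnP exP) => m /andP [hm hm0] hmin.
  have pos j : (0 < j < L)%N -> (j <= m)%N -> 0 < (vp j).[y].
    move=> hj hjm; rewrite lt_def A ?andbT; last by lia.
    apply/negP => /eqP hz.
    have := hmin j.-1; rewrite prednK; last by lia.
    rewrite hz eqxx andbT => h.
    have : (m <= j.-1)%N by apply: h; lia.
    lia.
  have mk : m = k.+1.
    apply/eqP; rewrite eqn_leq -ltnS hm /=; rewrite leqNgt; apply/negP => hmk.
    case: m hm hm0 hmin pos hmk => [|m] hm hm0 hmin pos hmk.
      by move: hm0; rewrite /= hornerC oner_eq0.
    have := A m.+3 ltac:(lia).
    rewrite vpS_horner (eqP hm0) mulr0 sub0r oppr_ge0 leNgt (pos m.+1) //; lia.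
  split; first by move: hm0; rewrite mk => /eqP.
  move=> j hj; apply: pos => //; lia.
- have : (2 * c 0%N) \in `]0, 2 * c 0%N + 1[.
    rewrite in_itv /= mulr_gt0 //=; lra.
  by move=> h; move: (hno _ h); rewrite r2.
Qed.
End Sh.
Theorem corollary1 (R : realType) (L : nat) (c : nat -> R)
  (hL : (2 <= L)%N)
  (hc : forall x : nat, (x.+1 < L)%N -> 0 < c x)
  (n : nat) (hn1 : (1 <= n)%N) (hn2 : (n <= L - 1)%N) :
  exists mu : R, is_lambda L c n mu /\ is_lambda L c 1 mu.
Proof.
move: hc hn2; case: L hL => [|[|k]] // _ hc hn2.
have hc' : forall i, (i < k.+1)%N -> 0 < c i by move=> i hi; apply: hc.
have hn2' : (n <= k.+1)%N by lia.
have [T [T0 [vL vpos]]] := shoot hc'.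
pose v j := (vp c j).[T].
have v0 : v 0%N = 0 by rewrite /v /= horner0.
have vrec : forall i, (i < k.+1)%N -> 2 * v i.+1 - v i - v i.+2 = T * (v i.+1 / c i).
  by move=> i _; rewrite /v vpS_horner; ring.
have isl m : (1 <= m)%N -> (m <= k.+1)%N -> is_lambda k.+2 c m T.
  move=> hm1 hm2; split => //.
    exact: (lift_eigen hc' T0 v0 vL vpos vrec hm1 hm2).
  move=> nu [f [_ [hnz hf]]] hnu.
  exact: (lower_bound hc' v0 vL vpos vrec hf hnz hnu).
by exists T; split; apply: isl.
Qed.
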